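(* Let $1\le i<n$ be integers with $\gcd(n,i)=d$, and let $J_n=\sum_{j=1}^{n-1}E_{j,j+1}\in M_n(\mathbb{C})$. Then $$l(\{J_n^i,(J_n^T)^{n-i}\})=l_0(\{J_n^i,(J_n^T)^{n-i}\})=\frac{2n}{d}-2.$$
   Context: $E_{i,j}$ is the matrix unit. For a finite subset $\mathcal S$ of $M_n(\mathbb{C})$: a word of length $m$ is a product $S_1\cdots S_m$ with $S_j\in\mathcal S$, the word of length $0$ being $I_n$. $\mathcal L_k(\mathcal S)$ is the span of words of length at most $k$ including $I_n$; $\mathcal L_k^0(\mathcal S)$ is the span of words of length between $1$ and $k$ (identity not automatically included). $l(\mathcal S)$ is the smallest $k$ with $\mathcal L_k(\mathcal S)=\mathcal L_{k+1}(\mathcal S)$, and $l_0(\mathcal S)$ is the smallest $k$ with $\mathcal L^0_k(\mathcal S)=\mathcal L^0_{k+1}(\mathcal S)$. *)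

(* Defs.v *)
(* The complex field C is rendered as algC. *)
From HB Require Import structures.
From mathcomp Require Import all_boot all_order all_algebra all_field.
Set Implicit Arguments. Unset Strict Implicit. Unset Printing Implicit Defensive.
Import GRing.Theory.
Local Open Scope ring_scope.

Section Words.
Variables (F : fieldType) (n : nat).

Definition mxpow (A : 'M[F]_n) (k : nat) : 'M[F]_n := iter k (mulmx A) 1%:M.

Fixpoint words (S : seq 'M[F]_n) (m : nat) : seq 'M[F]_n :=
  match m with
  | 0 => [:: 1%:M]
  | m'.+1 => [seq A *m w | A <- S, w <- words S m']
  end.

Definition Lspan (S : seq 'M[F]_n) (k : nat) : {vspace 'M[F]_n} :=
  <<flatten [seq words S m | m <- iota 0 k.+1]>>%VS.

Definition L0span (S : seq 'M[F]_n) (k : nat) : {vspace 'M[F]_n} :=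
  <<flatten [seq words S m | m <- iota 1 k]>>%VS.

Definition is_length (S : seq 'M[F]_n) (k : nat) : Prop :=
  Lspan S k = Lspan S k.+1 /\ (forall j, (j < k)%N -> Lspan S j <> Lspan S j.+1).

Definition is_length0 (S : seq 'M[F]_n) (k : nat) : Prop :=
  L0span S k = L0span S k.+1 /\ (forall j, (j < k)%N -> L0span S j <> L0span S j.+1).

End Words.

(* J_n = sum_{j=1}^{n-1} E_{j,j+1}; 0-indexed: ones at entries (a, a+1). *)
Definition Jmx (n : nat) : 'M[algC]_n :=
  \matrix_(a < n, b < n) (((b : nat) == (a : nat).+1)%:R : algC).

(* Main.v *)
From HB Require Import structures.
From mathcomp Require Import all_boot all_order all_algebra all_field.
From mathcomp Require Import zify.
Require Import Defs.

Section Arith.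
Variables n i : nat.
Hypotheses (hi1 : 0 < i) (hin : i < n).

Definition sg b := if i <= b then b - i else b + n - i.
Definition letter j y := i <= iter j sg y.
Fixpoint cntB k y := if k is k'.+1 then cntB k' y + ~~ letter k' y else 0.

Lemma sg_lt b : b < n -> sg b < n.
Proof. rewrite /sg; case: (leqP i b); lia. Qed.

Lemma iter_lt k {b} : b < n -> iter k sg b < n.
Proof. by move=> hb; elim: k => //= k IH; apply: sg_lt. Qed.

Lemma cntB_eq k {y} : y < n -> iter k sg y + k * i = y + n * cntB k y.
Proof.
move=> hy; elim: k => [|k IH] /=; first by lia.
rewrite /letter; have := iter_lt k hy; move: IH.
set z := iter k sg y; rewrite /sg; case: (leqP i z) => /= h; nia.
Qed.

Lemma sg_inj a b : a < n -> b < n -> sg a = sg b -> a = b.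
Proof. rewrite /sg; case: (leqP i a); case: (leqP i b); lia. Qed.

Definition d := gcdn n i.
Definition m := n %/ d.
Definition i' := i %/ d.

Lemma d_gt0 : 0 < d. Proof. by rewrite /d gcdn_gt0; apply/orP; right. Qed.
Lemma nE : n = m * d. Proof. by rewrite /m divnK // /d dvdn_gcdl. Qed.
Lemma iE : i = i' * d. Proof. by rewrite /i' divnK // /d dvdn_gcdr. Qed.

Lemma cop : coprime m i'.
Proof.
rewrite /coprime; apply/eqP.
have h : d = gcdn m i' * d by rewrite muln_gcdl -nE -iE.
have := d_gt0; nia.
Qed.

Lemma m_ge2 : 2 <= m.
Proof.
have h1 := nE. have h2 := iE. have h3 := d_gt0.
have : 0 < i' by nia.
nia.
Qed.

Lemma iter_m {y} : y < n -> iter m sg y = y.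
Proof.
move=> hy; have := cntB_eq m hy; have := iter_lt m hy.
have h1 := nE; have h2 := iE.
have e : m * i = n * i' by rewrite h2 h1; lia.
rewrite e; set u := iter m sg y; set c := cntB m y => hu.
case: (ltngtP c i') => hc; nia.
Qed.

Lemma cntB_m {y} : y < n -> cntB m y = i'.
Proof.
move=> hy; have := cntB_eq m hy; rewrite iter_m //.
have h1 := nE; have h2 := iE.
have e : m * i = n * i' by rewrite h2 h1; lia.
rewrite e => h.
have : 0 < n by lia.
nia.
Qed.

Lemma iter_fix k z : z < n -> iter k sg z = z -> m %| k.
Proof.
move=> hz hf; have := cntB_eq k hz; rewrite hf.
have h1 := nE; have h2 := iE; have h3 := d_gt0.
set c := cntB k z => h.
have e : k * i' = m * c by nia.
rewrite -(Gauss_dvdl k cop) e; apply: dvdn_mulr; exact: dvdnn.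
Qed.

Lemma iter_mod k {y} : y < n -> iter k sg y = iter (k %% m) sg y.
Proof.
move=> hy; rewrite {1}(divn_eq k m); elim: (k %/ m) => [|q IH].
  by rewrite mul0n add0n.
by rewrite mulSn -addnA addnC iterD iter_m // iter_lt.
Qed.

Lemma iter_eqE a b {y} : y < n -> (iter a sg y == iter b sg y) = (a %% m == b %% m).
Proof.
move=> hy; apply/eqP/eqP => [|e]; last by rewrite (iter_mod a hy) (iter_mod b hy) e.
rewrite (iter_mod a hy) (iter_mod b hy).
have hm : 0 < m by have := m_ge2; lia.
have ha := ltn_pmod a hm; have hb := ltn_pmod b hm.
wlog hab : a b ha hb / a %% m <= b %% m.
  move=> W; case: (leqP (a %% m) (b %% m)) => h; first exact: W.
  by move=> e; symmetry; apply: (W b a hb ha); [lia | rewrite e].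
move=> e.
have : m %| (b %% m - a %% m).
  apply: (@iter_fix _ (iter (a %% m) sg y)); first exact: iter_lt.
  by rewrite -iterD subnK.
case/dvdnP=> q; move: ha hb hab; set x := a %% m; set x2 := b %% m => ha hb hab hq.
case: q hq => [|q] hq; nia.
Qed.


Fixpoint sig k y := if k is k'.+1 then letter k' y :: sig k' y else [::].

Lemma size_sig k y : size (sig k y) = k.
Proof. by elim: k => //= k ->. Qed.

Lemma sig_eqP k y z :
  reflect (forall j, j < k -> letter j y = letter j z) (sig k y == sig k z).
Proof.
elim: k => [|k IH] /=; first by apply: ReflectT.
rewrite eqseq_cons; apply: (iffP andP) => [[/eqP h1 /IH h2] j hj|h].
  by case: (ltngtP j k) => hjk; [apply: h2 | lia | rewrite hjk].
split; first by rewrite h.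
by apply/IH => j hj; apply: h; lia.
Qed.

Lemma cntB_det k y z : (forall j, j < k -> letter j y = letter j z) -> cntB k y = cntB k z.
Proof.
elim: k => //= k IH h; rewrite IH ?h // => j hj; apply: h; lia.
Qed.

Lemma letter_mod j {y} : y < n -> letter j y = letter (j %% m) y.
Proof. by move=> hy; rewrite /letter (iter_mod j hy). Qed.

Lemma key y z : y < n -> z < n -> sig (m.-1) y = sig (m.-1) z ->
  sig (2 * m).-1 y = sig (2 * m).-1 z.
Proof.
move=> hy hz /eqP/sig_eqP h; apply/eqP/sig_eqP => j hj.
have hm := m_ge2.
have hlast : letter m.-1 y = letter m.-1 z.
  have := cntB_m hy; have := cntB_m hz.
  have -> : m = (m.-1).+1 by lia.
  move=> /= e1 e2; rewrite (@cntB_det _ _ _ h) in e2.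
  by move: e1 e2; case: (letter m.-1 y); case: (letter m.-1 z) => //=; lia.
rewrite (letter_mod j hy) (letter_mod j hz).
have : j %% m < m by apply: ltn_pmod; lia.
case: (ltngtP (j %% m) m.-1) => h1 h2; [by apply: h | lia | by rewrite h1].
Qed.

Definition x0 := n.-1 - i.

Lemma pair_iter j : j <= m - 2 -> iter j sg x0.+1 = (iter j sg x0).+1.
Proof.
have hm := m_ge2.
have hx : x0 < n by rewrite /x0; lia.
have s1 : sg i.-1 = n.-1 by rewrite /sg; case: leqP; lia.
have s2 : sg n.-1 = x0 by rewrite /sg /x0; case: leqP; lia.
have e1 : iter m.-1 sg x0 = n.-1.
  have h := @iter_m n.-1 ltac:(lia).
  by rewrite -s2 -iterSr prednK; [exact: h | lia].
have e2 : iter (m - 2) sg x0 = i.-1.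
  apply: sg_inj; [exact: (iter_lt _ hx) | lia |].
  by rewrite s1 -e1; have -> : m.-1 = (m - 2).+1 by lia.
elim: j => [|j IH] hj //=.
rewrite IH; last by lia.
have ha : iter j sg x0 != i.-1.
  rewrite -e2 (iter_eqE _ _ hx) !modn_small; lia.
have hb : iter j sg x0 != n.-1.
  rewrite -e1 (iter_eqE _ _ hx) !modn_small; lia.
move: ha hb (iter_lt j hx); set u := iter j sg x0 => ha hb hu.
rewrite /sg; case: (leqP i u); case: (leqP i u.+1); lia.
Qed.

Lemma pair_sig k : k <= m - 2 -> sig k x0 = sig k x0.+1.
Proof.
move=> hk; apply/eqP/sig_eqP => j hj.
rewrite /letter pair_iter; last by lia.
have hm := m_ge2.
have hx : x0 < n by rewrite /x0; lia.
have s1 : sg i.-1 = n.-1 by rewrite /sg; case: leqP; lia.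
have s2 : sg n.-1 = x0 by rewrite /sg /x0; case: leqP; lia.
have e1 : iter m.-1 sg x0 = n.-1.
  have h := @iter_m n.-1 ltac:(lia).
  by rewrite -s2 -iterSr prednK; [exact: h | lia].
have e2 : iter (m - 2) sg x0 = i.-1.
  apply: sg_inj; [exact: (iter_lt _ hx) | lia |].
  by rewrite s1 -e1; have -> : m.-1 = (m - 2).+1 by lia.
have ha : iter j sg x0 != i.-1.
  rewrite -e2 (iter_eqE _ _ hx) !modn_small; lia.
move: ha; set u := iter j sg x0 => ha.
apply/idP/idP; lia.
Qed.

Lemma pair_diff : letter (m - 2) x0 != letter (m - 2) x0.+1.
Proof.
have hm := m_ge2.
have hx : x0 < n by rewrite /x0; lia.
have s1 : sg i.-1 = n.-1 by rewrite /sg; case: leqP; lia.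
have s2 : sg n.-1 = x0 by rewrite /sg /x0; case: leqP; lia.
have e1 : iter m.-1 sg x0 = n.-1.
  have h := @iter_m n.-1 ltac:(lia).
  by rewrite -s2 -iterSr prednK; [exact: h | lia].
have e2 : iter (m - 2) sg x0 = i.-1.
  apply: sg_inj; [exact: (iter_lt _ hx) | lia |].
  by rewrite s1 -e1; have -> : m.-1 = (m - 2).+1 by lia.
rewrite /letter pair_iter // e2.
have -> : (i <= i.-1) = false by lia.
have -> : (i <= i.-1.+1) = true by lia.
by [].
Qed.


Import GRing.Theory.
Local Open Scope ring_scope.

Lemma sum_one (F : 'I_n -> algC) (t : 'I_n) :
  (forall z, z != t -> F z = 0) -> \sum_z F z = F t.
Proof.
move=> h; rewrite (bigD1 t) //= big1 ?addr0 // => z hz; exact: h.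
Qed.

Lemma Jpow k (a b : 'I_n) : mxpow (Jmx n) k a b = ((b : nat) == (a + k)%N)%:R.
Proof.
elim: k a b => [|k IH] a b.
  by rewrite /mxpow /= mxE addn0 eq_sym.
rewrite /mxpow /= -/(mxpow (Jmx n) k) mxE.
case: (ltnP a.+1 n) => ha.
  rewrite (@sum_one _ (Ordinal ha)) => [|z hz]; last first.
    rewrite mxE; have -> : ((z : nat) == a.+1) = false.
      by apply/negbTE; apply: contra hz => /eqP e; apply/eqP/val_inj.
    by rewrite mul0r.
  by rewrite mxE IH /= eqxx mul1r addSnnS.
rewrite big1 => [|z _]; last first.
  rewrite mxE; have -> : ((z : nat) == a.+1) = false.
    by apply/negbTE; have := ltn_ord z; lia.
  by rewrite mul0r.
have -> : ((b : nat) == (a + k.+1)%N) = false by apply/negbTE; have := ltn_ord b; lia.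
by [].
Qed.

Lemma JTpow k (a b : 'I_n) : mxpow (Jmx n)^T k a b = ((a : nat) == (b + k)%N)%:R.
Proof.
elim: k a b => [|k IH] a b.
  by rewrite /mxpow /= mxE addn0.
rewrite /mxpow /= -/(mxpow (Jmx n)^T k) mxE.
case: (ltnP (b + k)%N n) => hb.
  rewrite (@sum_one _ (Ordinal hb)) => [|z hz]; last first.
    rewrite IH; have -> : ((z : nat) == (b + k)%N) = false.
      by apply/negbTE; apply: contra hz => /eqP e; apply/eqP/val_inj.
    by rewrite mulr0.
  by rewrite IH /= eqxx mulr1 !mxE addnS.
rewrite big1 => [|z _]; last first.
  rewrite IH; have -> : ((z : nat) == (b + k)%N) = false.
    by apply/negbTE; have := ltn_ord z; lia.
  by rewrite mulr0.
have -> : ((a : nat) == (b + k.+1)%N) = false by apply/negbTE; have := ltn_ord a; lia.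
by [].
Qed.

Definition Am := mxpow (Jmx n) i.
Definition Bm := mxpow (Jmx n)^T (n - i).
Definition Lm (c : bool) := if c then Am else Bm.

Lemma Lm_E c (a b : 'I_n) :
  Lm c a b = (((i <= b)%N == c) && ((a : nat) == sg b))%:R.
Proof.
have ha := ltn_ord a; have hb := ltn_ord b.
case: c; rewrite /Lm /Am /Bm ?Jpow ?JTpow /sg; case: (leqP i b) => h /=;
  congr (_%:R); apply/eqP/eqP; lia.
Qed.

Fixpoint W (s : seq bool) : 'M[algC]_n :=
  if s is c :: s' then Lm c *m W s' else 1%:M.

Lemma W_E s (a y : 'I_n) :
  W s a y = ((sig (size s) y == s) && ((a : nat) == iter (size s) sg y))%:R.
Proof.
elim: s a => [|c s IH] a /=.
  by rewrite mxE.
have hy := ltn_ord y.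
rewrite mxE (@sum_one _ (Ordinal (iter_lt (size s) hy))) => [|z hz]; last first.
  rewrite IH; have -> : ((z : nat) == iter (size s) sg y) = false.
    by apply/negbTE; apply: contra hz => /eqP e; apply/eqP/val_inj.
  by rewrite andbF mulr0.
rewrite IH /= eqxx andbT Lm_E /= eqseq_cons /letter.
by case: (sig (size s) y == s); case: (_ == c); rewrite /= ?mulr1 ?mulr0 ?mul1r ?mul0r.
Qed.

Definition S := [:: mxpow (Jmx n) i; mxpow (Jmx n)^T (n - i)].

Lemma words_S k : words S k.+1 = [seq (L *m w)%R | L <- S, w <- words S k].
Proof. by []. Qed.

Lemma words_W k w : w \in words S k -> exists s, size s = k /\ w = W s.
Proof.
elim: k w => [|k IH] w.
  by rewrite inE => /eqP ->; exists [::].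
rewrite words_S => hw; have [[L u] /= [hL hu ->]] := elimT allpairsP hw.
have [s [hs ->]] := IH _ hu.
move: hL; rewrite !inE => /orP [] /eqP ->.
  by exists (true :: s); rewrite /= hs.
by exists (false :: s); rewrite /= hs.
Qed.

Lemma W_words s : W s \in words S (size s).
Proof.
elim: s => [|c s IH]; first by rewrite inE.
rewrite [size _]/= words_S [W _]/=; apply: (introT allpairsP); exists (Lm c, W s) => /=; split => //.
by case: c; rewrite !inE eqxx ?orbT.
Qed.


Lemma span_entries (X : seq 'M[algC]_n) (a b a' b' : 'I_n) (c : algC) :
  (forall u, u \in X -> u a b = c * u a' b') ->
  forall v, v \in <<X>>%VS -> v a b = c * v a' b'.
Proof.
move=> h v hv; rewrite (@coord_span _ _ _ (in_tuple X) v hv).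
rewrite !summxE mulr_sumr; apply: eq_bigr => k _.
by rewrite !mxE h ?mem_nth // mulrCA.
Qed.

Lemma flatP a b w : reflect (exists2 l, (a <= l < a + b)%N & w \in words S l)
  (w \in flatten [seq words S l | l <- iota a b]).
Proof.
by apply: (iffP flatten_mapP) => [[l h1 h2]|[l h1 h2]]; exists l => //; [rewrite -mem_iota | rewrite mem_iota].
Qed.

Lemma top_words w : w \in words S (2 * m).-1 -> w \in words S m.-1 \/ w = 0.
Proof.
have hm := m_ge2.
move=> /words_W [s [hs ->]].
case: (pickP (fun y : 'I_n => sig (2 * m).-1 y == s)) => [y0 /eqP hy0 | hnone].
  left; suff -> : W s = W (sig m.-1 y0).
    by have := W_words (sig m.-1 y0); rewrite size_sig.
  apply/matrixP => a y; rewrite !W_E size_sig hs.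
  have hy := ltn_ord y; have hy0' := ltn_ord y0.
  have -> : iter (2 * m).-1 sg y = iter m.-1 sg y.
    have -> : (2 * m).-1 = (m.-1 + m)%N by lia.
    by rewrite iterD iter_m.
  congr (_ && _)%:R; rewrite -hy0; apply/eqP/eqP => [e|e]; last exact: key.
  apply/eqP/sig_eqP => j hj; move/eqP/sig_eqP: e; apply; lia.
right; apply/matrixP => a y; rewrite W_E hs hnone mxE //.
Qed.

Lemma mod2 x : (x < 2 * m)%N -> (x %% m = if x < m then x else x - m)%N.
Proof.
have hm := m_ge2.
move=> hx; case: ltnP => h; first by rewrite modn_small.
by rewrite -{1}(subnK h) modnDr modn_small //; lia.
Qed.

Lemma sep j : (j < (2 * m - 2))%N -> exists w, w \in words S j.+1 /\
  forall X : seq 'M[algC]_n,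
    (forall u, u \in X -> exists2 l, (l <= j)%N & u \in words S l) -> w \notin <<X>>%VS.
Proof.
move=> hj; have hm := m_ge2.
have hx : (x0 < n)%N by rewrite /x0; lia.
have hx1 : (x0.+1 < n)%N by rewrite /x0; lia.
pose b := Ordinal hx; pose a := Ordinal (iter_lt j.+1 hx).
exists (W (sig j.+1 x0)); split; first by have := W_words (sig j.+1 x0); rewrite size_sig.
move=> X hX; apply/negP => hin'.
case: (ltnP j.+1 m) => hjm.
  have hyp : forall u, u \in X -> u a b = 0 * u a b.
    move=> u /hX [l hl /words_W [s [hs ->]]]; rewrite W_E mul0r hs /=.
    rewrite -iterS (iter_eqE _ _ hx) !modn_small; try lia.
    have -> : (j.+1 == l) = false by lia.
    by rewrite andbF.
  have := @span_entries X a b a b 0 hyp _ hin'.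
  rewrite W_E size_sig eqxx /= eqxx mul0r.
  by move=> /eqP; rewrite Num.Theory.pnatr_eq0.
pose b' := Ordinal hx1; pose a' := Ordinal (iter_lt j.+1 hx1).
have hyp : forall u, u \in X -> u a b = 1 * u a' b'.
  move=> u /hX [l hl /words_W [s [hs ->]]]; rewrite !W_E mul1r hs.
  rewrite /= -!iterS (iter_eqE _ _ hx) (iter_eqE _ _ hx1).
  case E: (j.+1 %% m == l %% m)%N; last by rewrite !andbF.
  rewrite !andbT pair_sig //.
  move: E; rewrite (@mod2 j.+1) ?(@mod2 l); try lia.
  case: ifP; case: ifP; lia.
have := @span_entries X a b a' b' 1 hyp _ hin'.
rewrite !W_E size_sig eqxx /= eqxx mul1r.
have -> : (sig j.+1 x0.+1 == sig j.+1 x0) = false.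
  apply/negP => /sig_eqP h.
  have := pair_diff; rewrite h ?eqxx //; lia.
by move=> /eqP; rewrite Num.Theory.pnatr_eq0.
Qed.


Lemma K_eq : ((2 * n) %/ d - 2)%N = (2 * m - 2)%N.
Proof. by rewrite {1}nE mulnA mulnK // d_gt0. Qed.

Lemma main_all : is_length S ((2 * n) %/ gcdn n i - 2) /\
                 is_length0 S ((2 * n) %/ gcdn n i - 2).
Proof.
have hm := m_ge2.
rewrite -/d K_eq; split; split.
- rewrite /Lspan; apply/eqP; rewrite eqEsubv; apply/andP; split.
    apply: sub_span => w /flatP [l hl hw]; apply/flatP; exists l => //; lia.
  apply/span_subvP => w /flatP [l hl hw].
  case: (ltnP l (2 * m - 2).+1) => hl'.
    by apply: memv_span; apply/flatP; exists l => //; lia.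
  have e : l = (2 * m).-1 by lia.
  rewrite e in hw; case: (top_words _ hw) => [h|->]; last exact: mem0v.
  by apply: memv_span; apply/flatP; exists m.-1 => //; lia.
- move=> j hj e; have [w [hw hX]] := sep _ hj.
  have : w \in Lspan S j.
    by rewrite e; apply: memv_span; apply/flatP; exists j.+1 => //; lia.
  rewrite /Lspan; apply/negP; apply: hX => u /flatP [l hl hu]; exists l => //; lia.
- rewrite /L0span; apply/eqP; rewrite eqEsubv; apply/andP; split.
    apply: sub_span => w /flatP [l hl hw]; apply/flatP; exists l => //; lia.
  apply/span_subvP => w /flatP [l hl hw].
  case: (ltnP l (2 * m - 2).+1) => hl'.
    by apply: memv_span; apply/flatP; exists l => //; lia.
  have e : l = (2 * m).-1 by lia.
  rewrite e in hw; case: (top_words _ hw) => [h|->]; last exact: mem0v.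
  by apply: memv_span; apply/flatP; exists m.-1 => //; lia.
- move=> j hj e; have [w [hw hX]] := sep _ hj.
  have : w \in L0span S j.
    by rewrite e; apply: memv_span; apply/flatP; exists j.+1 => //; lia.
  rewrite /L0span; apply/negP; apply: hX => u /flatP [l hl hu]; exists l => //; lia.
Qed.

End Arith.

Local Open Scope ring_scope.

Theorem mainTheorem9 (n i : nat) (hi1 : (1 <= i)%N) (hin : (i < n)%N) :
  let d := gcdn n i in
  let S := [:: mxpow (Jmx n) i; mxpow (Jmx n)^T (n - i)] in
  is_length S ((2 * n) %/ d - 2) /\ is_length0 S ((2 * n) %/ d - 2).
Proof. exact: (@main_all n i hi1 hin). Qed.
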